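(* The uniform matroid $U_{2,4}$ (ground set of 4 elements, bases = all 2-element subsets) is not BUMAC; that is, there is no binary MAC $W$ with 4 users such that $I(X[S];Y,X[S^c])$ equals the rank function of $U_{2,4}$ on $\{1,2,3,4\}$ (namely $\min(|S|,2)$) for all $S\subseteq\{1,2,3,4\}$.
   Context: A binary MAC with $m$ users is a channel $W$ with input alphabet $\mathbb{F}_2^m$ and finite output alphabet $\mathcal{Y}$. Let $E_m=\{1,\dots,m\}$, let $X[E_m]$ have i.i.d. uniform components on $\mathbb{F}_2$, and let $Y$ be the output of $W$ with input $X[E_m]$. For $S\subseteq E_m$, $X[S]=(X[i])_{i\in S}$, $S^c=E_m\setminus S$. Mutual information is in bits. A matroid is BUMAC if it is isomorphic to the matroid on $E_m$ with rank function $S\mapsto I(X[S];Y,X[S^c])$ for some binary MAC $W$. *)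

(* Defs.v *)
From mathcomp Require Import all_boot all_order all_algebra.
From mathcomp Require Import reals exp.
Set Implicit Arguments. Unset Strict Implicit. Unset Printing Implicit Defensive.
Import Order.TTheory GRing.Theory Num.Theory.
Local Open Scope ring_scope.

Section InfoTheory.
Variable R : realType.

Definition log2 (x : R) : R := ln x / ln 2.

Variables (Omega : finType) (P : Omega -> R).

Definition joint (A B : eqType) (f : Omega -> A) (g : Omega -> B) (a : A) (b : B) : R :=
  \sum_(w : Omega | (f w == a) && (g w == b)) P w.
Definition law (A : eqType) (f : Omega -> A) (a : A) : R :=
  \sum_(w : Omega | f w == a) P w.

Definition mutual_info (A B : finType) (f : Omega -> A) (g : Omega -> B) : R :=
  \sum_(a : A) \sum_(b : B)
     let pab := joint f g a b in
     if pab == 0 then 0 else pab * log2 (pab / (law f a * law g b)).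
End InfoTheory.

(* Inputs of a binary MAC with m users: vectors in F_2^m, indexed by 'I_m. *)
Definition input (m : nat) := {ffun 'I_m -> bool}.

(* W is a binary MAC with m users and finite output alphabet Y:
   W x y = W(y|x) is a transition probability. *)
Definition is_MAC (R : realType) (m : nat) (Y : finType) (W : input m -> Y -> R) : Prop :=
  (forall x y, 0 <= W x y) /\ (forall x, \sum_(y : Y) W x y = 1).

(* Sample space: (X[E_m], Y) with X uniform i.i.d. on F_2^m and Y ~ W(.|X). *)
Definition MAC_prob (R : realType) (m : nat) (Y : finType) (W : input m -> Y -> R)
  (w : input m * Y) : R := W w.1 w.2 / (2 ^+ m).

(* X[S] encoded as the restriction of x to S (coordinates outside S set to false). *)
Definition restr (m : nat) (S : {set 'I_m}) (x : input m) : input m :=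
  [ffun i => if i \in S then x i else false].

Definition MAC_rank (R : realType) (m : nat) (Y : finType) (W : input m -> Y -> R)
  (S : {set 'I_m}) : R :=
  mutual_info (MAC_prob W)
    (fun w : input m * Y => restr S w.1)
    (fun w : input m * Y => (w.2, restr (~: S) w.1)).

(* Main.v *)
Require Import Defs.
From mathcomp Require Import all_boot all_order all_algebra.
From mathcomp Require Import reals exp ring lra.
Import Order.TTheory GRing.Theory Num.Theory.
Local Open Scope ring_scope.

Section Gen.
Variable R : realType.
Variables (T : finType) (P : T -> R) (A B : finType) (f : T -> A) (g : T -> B).
Hypothesis P0 : forall w, 0 <= P w.
Hypothesis P1 : \sum_w P w = 1.

Lemma joint_ge0 a b : 0 <= joint P f g a b.
Proof. by apply: sumr_ge0 => w _; apply: P0. Qed.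

Lemma law_ge0 (C : eqType) (h : T -> C) c : 0 <= law P h c.
Proof. by apply: sumr_ge0 => w _; apply: P0. Qed.

Lemma joint_le_lawg a b : joint P f g a b <= law P g b.
Proof.
rewrite /joint /law [X in _ <= X](bigID (fun w => f w == a)) /=.
rewrite [X in _ <= X + _](eq_bigl (fun w => (f w == a) && (g w == b))) /=; last by move=> w; rewrite andbC.
by rewrite lerDl sumr_ge0.
Qed.

Lemma joint_le_lawf a b : joint P f g a b <= law P f a.
Proof.
rewrite /joint /law [X in _ <= X](bigID (fun w => g w == b)) /=.
by rewrite lerDl sumr_ge0.
Qed.

Lemma joint_ge_P w : P w <= joint P f g (f w) (g w).
Proof.
rewrite /joint (bigD1 w) /=; last by rewrite !eqxx.
by rewrite lerDl sumr_ge0.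
Qed.

Lemma joint_pos a b : joint P f g a b != 0 ->
  exists w, [/\ f w = a, g w = b & 0 < P w].
Proof.
move=> H.
case: (pickP (fun w => (f w == a) && (g w == b) && (0 < P w))) =>
  [w /andP[/andP[/eqP ? /eqP ?] ?]|H0]; first by exists w.
exfalso; move/eqP: H; apply.
rewrite /joint big1 // => w Hw; move: (H0 w); rewrite Hw /= => /negbT.
by rewrite lt_def negb_and negbK P0 orbF => /eqP.
Qed.

Lemma sum_joint : \sum_a \sum_b joint P f g a b = 1.
Proof.
rewrite -P1 (partition_big f predT) //=; apply: eq_bigr => a _.
rewrite (partition_big g predT) //=; apply: eq_bigr => b _.
Qed.

Lemma sum_lawg : \sum_b law P g b = 1.
Proof.
rewrite -P1 (partition_big g predT) //=.
Qed.

Lemma ln2_gt0 : 0 < ln (2 : R).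
Proof. by apply: ln_gt0; rewrite ltr1n. Qed.

Lemma mi_det (c : R) : 0 < c ->
  (forall w, 0 < P w -> c <= law P f (f w)) ->
  mutual_info P f g = - log2 c ->
  forall w w', 0 < P w -> 0 < P w' -> g w = g w' -> f w = f w'.
Proof.
move=> c0 Hc Hmi.
have l2 := ln2_gt0.
pose U a b := let p := joint P f g a b in
  if p == 0 then 0 else p * log2 (p / law P g b).
have Ule0 : forall a b, U a b <= 0.
  move=> a b; rewrite /U /=; case: eqP => // /eqP pn0.
  have p0 : 0 < joint P f g a b by rewrite lt_def pn0 joint_ge0.
  have lb : 0 < law P g b by apply: lt_le_trans p0 (joint_le_lawg _ _).
  apply: mulr_ge0_le0; first exact: ltW.
  apply: mulr_le0_ge0; last by rewrite invr_ge0 ltW.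
  by apply: ln_le0; rewrite ler_pdivrMr // mul1r joint_le_lawg.
have Hineq : forall a b,
   (let p := joint P f g a b in
    if p == 0 then 0 else p * log2 (p / (law P f a * law P g b)))
   <= U a b + joint P f g a b * (- log2 c).
  move=> a b; rewrite /U /=; case: eqP => [->|/eqP pn0]; first by rewrite mul0r addr0.
  have p0 : 0 < joint P f g a b by rewrite lt_def pn0 joint_ge0.
  have lb : 0 < law P g b by apply: lt_le_trans p0 (joint_le_lawg _ _).
  have la : 0 < law P f a by apply: lt_le_trans p0 (joint_le_lawf _ _).
  have [w [fw _ Pw]] := @joint_pos a b pn0.
  have cla : c <= law P f a by rewrite -fw; apply: Hc.
  have Hd : ln c <= ln (law P f a) by rewrite ler_ln // posrE.
  rewrite /log2 !ln_div ?posrE ?mulr_gt0 // lnM ?posrE //.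
  have Hq : 0 <= joint P f g a b * (ln 2)^-1 by apply: mulr_ge0; [exact: ltW | rewrite invr_ge0 ltW].
  set p := joint P f g a b in Hq *.
  set i := (ln 2)^-1 in Hq *.
  nra.
have Hsum : mutual_info P f g <= \sum_a \sum_b U a b + - log2 c.
  rewrite /mutual_info -[X in _ + X]mul1r -sum_joint mulr_suml -big_split /=.
  apply: ler_sum => a _; rewrite mulr_suml -big_split /=.
  by apply: ler_sum => b _; apply: Hineq.
have HU : forall a b, U a b = 0.
  have S0 : \sum_a \sum_b U a b = 0.
    apply/eqP; rewrite eq_le; apply/andP; split.
      by apply: sumr_le0 => a _; apply: sumr_le0 => b _.
    by move: Hsum; rewrite Hmi lerDr.
  move: S0; rewrite pair_bigA /= => S0.
  have S1 : \sum_(p : A * B) - U p.1 p.2 = 0 by rewrite sumrN S0 oppr0.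
  move=> a b.
  have H0 : forall p : A * B, predT p -> 0 <= - U p.1 p.2 by move=> p _; rewrite oppr_ge0.
  have := @psumr_eq0P _ _ predT (fun p : A * B => - U p.1 p.2) H0 S1 (a, b) isT.
  by move=> /= /eqP; rewrite oppr_eq0 => /eqP.
move=> w w' Pw Pw' gw.
set a := f w; set b := g w.
have p0 : 0 < joint P f g a b := lt_le_trans Pw (joint_ge_P w).
have lb : 0 < law P g b by apply: lt_le_trans p0 (joint_le_lawg _ _).
have Heq : joint P f g a b = law P g b.
  have := HU a b; rewrite /U /= (negbTE (lt0r_neq0 p0)) => /eqP.
  rewrite mulf_eq0 (negbTE (lt0r_neq0 p0)) /= /log2 mulf_eq0 invr_eq0.
  rewrite (negbTE (lt0r_neq0 l2)) orbF ln_eq0 ?divr_gt0 // => /eqP H.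
  by rewrite -(divfK (lt0r_neq0 lb) (joint P f g a b)) H mul1r.
case: (eqVneq (f w') a) => // Hne.
have : joint P f g a b + P w' <= law P g b.
  rewrite /law (bigID (fun w => f w == a)) /=.
  rewrite [X in _ <= X + _](eq_bigl (fun w => (f w == a) && (g w == b))) /=; last by move=> v; rewrite andbC.
  rewrite lerD2l (bigD1 w') /=; last by rewrite Hne -gw eqxx.
  by rewrite lerDl sumr_ge0.
by rewrite -Heq -{2}[joint _ _ _ _ _]addr0 lerD2l leNgt Pw'.
Qed.

Lemma ln4E : ln (4 : R) = ln 2 *+ 2.
Proof. by rewrite -lnXn // expr2 -natrM. Qed.

Lemma mi_big :
  (forall a, law P f a <= 16^-1) ->
  (forall b a1 a2 a3, joint P f g a1 b != 0 -> joint P f g a2 b != 0 ->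
     joint P f g a3 b != 0 -> [\/ a1 = a2, a1 = a3 | a2 = a3]) ->
  2 < mutual_info P f g.
Proof.
move=> Hla H3.
have l2 := ln2_gt0.
pose D a b := let p := joint P f g a b in if p == 0 then 0 else law P g b / 4.
pose L a b := joint P f g a b * ln 4 + joint P f g a b - D a b.
have H1 : forall a b, L a b / ln 2 <=
   (let p := joint P f g a b in
    if p == 0 then 0 else p * log2 (p / (law P f a * law P g b))).
  move=> a b; rewrite /L /D /=; case: eqP => [->|/eqP pn0].
    by rewrite mul0r addr0 subr0 mul0r.
  have p0 : 0 < joint P f g a b by rewrite lt_def pn0 joint_ge0.
  have lb : 0 < law P g b by apply: lt_le_trans p0 (joint_le_lawg _ _).
  have la : 0 < law P f a by apply: lt_le_trans p0 (joint_le_lawf _ _).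
  have la16 := Hla a.
  set p := joint P f g a b in p0 pn0 *.
  set xa := law P f a in la la16 *.
  set xb := law P g b in lb *.
  have Hx : 16 * (p / xb) <= p / (xa * xb).
    have E : p / (xa * xb) - 16 * (p / xb) = (p / xb) * (1 - 16 * xa) / xa.
      by field; rewrite (lt0r_neq0 la) (lt0r_neq0 lb).
    rewrite -subr_ge0 E; apply: divr_ge0; last exact: ltW.
    apply: mulr_ge0; first by rewrite divr_ge0 // ltW.
    have : 16 * xa <= 1.
      lra.
    by rewrite subr_ge0.
  have Hl1 : ln (16 * (p / xb)) <= ln (p / (xa * xb)).
    have q0 : 0 < p / xb by rewrite divr_gt0.
    have q1 : 0 < p / (xa * xb) by rewrite divr_gt0 // mulr_gt0.
    have q2 : 0 < 16 * (p / xb) by rewrite mulr_gt0.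
    by rewrite ler_ln.
  have Hsplit : ln (16 * (p / xb)) = ln 4 + ln (4 * (p / xb)).
    have q3 : 0 < 4 * (p / xb) by rewrite mulr_gt0 // divr_gt0.
    rewrite -lnM ?posrE // [in RHS]mulrA; congr (ln (_ * _)); lra.
  have Hlo : 1 - xb / (4 * p) <= ln (4 * (p / xb)).
    have h := @le_ln1Dx R (xb / (4 * p) - 1).
    have : -1 < xb / (4 * p) - 1 by rewrite ltrBrDr addNr divr_gt0 ?mulr_gt0.
    move=> /h; rewrite addrC subrK.
    have -> : xb / (4 * p) = (4 * (p / xb))^-1.
      by field; rewrite (lt0r_neq0 p0) (lt0r_neq0 lb).
    rewrite lnV ?posrE ?mulr_gt0 ?divr_gt0 ?invr_gt0 //.
    lra.
  have Hmul : p * (1 - xb / (4 * p)) = p - xb / 4.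
    by field; rewrite (lt0r_neq0 p0).
  have M1 : p * (1 - xb / (4 * p)) <= p * ln (4 * (p / xb)) := ler_wpM2l (ltW p0) Hlo.
  have M2 : p * ln (16 * (p / xb)) <= p * ln (p / (xa * xb)) := ler_wpM2l (ltW p0) Hl1.
  rewrite /log2 mulrA ler_pM2r ?invr_gt0 //.
  rewrite Hsplit mulrDr Hmul in M2 M1.
  lra.
have H2 : forall b, \sum_a D a b <= law P g b / 2.
  move=> b; set S := [set a | joint P f g a b != 0].
  have Hc : (#|S| <= 2)%N.
    rewrite leqNgt; apply/negP => H.
    have /card_gt0P [a1 Ha1] : (0 < #|S|)%N by rewrite (leq_trans _ H).
    have H' : (1 < #|S :\ a1|)%N by move: H; rewrite (cardsD1 a1) Ha1.
    have /card_gt0P [a2 Ha2] : (0 < #|S :\ a1|)%N by apply: ltnW.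
    have H'' : (0 < #|S :\ a1 :\ a2|)%N by move: H'; rewrite (cardsD1 a2) Ha2.
    have /card_gt0P [a3 Ha3] := H''.
    move: Ha3 Ha2 Ha1; rewrite !inE => /and3P[n32 n31 j3] /andP[n21 j2] j1.
    case: (H3 b a1 a2 a3 j1 j2 j3) => E.
    - by rewrite E eqxx in n21.
    - by rewrite E eqxx in n31.
    - by rewrite E eqxx in n32.
  have -> : \sum_a D a b = \sum_(a in S) law P g b / 4.
    rewrite [RHS]big_mkcond /=; apply: eq_bigr => a _.
    by rewrite /D inE /=; case: eqP.
  rewrite sumr_const -mulr_natr.
  have : (#|S|%:R : R) <= 2 by rewrite ler_nat.
  have := @law_ge0 _ g b.
  nra.
have E : \sum_a \sum_b L a b =
   (\sum_a \sum_b joint P f g a b) * ln 4 + \sum_a \sum_b joint P f g a b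
   - \sum_a \sum_b D a b.
  rewrite mulr_suml -big_split /= -sumrB; apply: eq_bigr => a _.
  by rewrite mulr_suml -big_split /= -sumrB.
have HD : \sum_a \sum_b D a b <= 2^-1.
  rewrite exchange_big /=.
  apply: (@le_trans _ _ (\sum_b law P g b / 2)); first by apply: ler_sum => b _.
  by rewrite -mulr_suml sum_lawg mul1r.
have Hmi : (\sum_a \sum_b L a b) / ln 2 <= mutual_info P f g.
  rewrite /mutual_info mulr_suml; apply: ler_sum => a _.
  rewrite mulr_suml; apply: ler_sum => b _; exact: H1.
move: Hmi; rewrite E sum_joint ln4E mulr2n => Hmi.
apply: lt_le_trans Hmi.
rewrite ltr_pdivlMr //.
lra.
Qed.

End Gen.

Definition i0 : 'I_4 := @Ordinal 4 0 isT.
Definition i1 : 'I_4 := @Ordinal 4 1 isT.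
Definition i2 : 'I_4 := @Ordinal 4 2 isT.
Definition i3 : 'I_4 := @Ordinal 4 3 isT.

Lemma comb12 (a0 a1 a2 a3 b0 b1 b2 b3 c0 c1 c2 c3 : bool) :
  [|| ((a0 == b0) && (a1 == b1)),
    ((a0 == b0) && (a2 == b2)),
    ((a0 == b0) && (a3 == b3)),
    ((a1 == b1) && (a2 == b2)),
    ((a1 == b1) && (a3 == b3)),
    ((a2 == b2) && (a3 == b3)),
    ((a0 == c0) && (a1 == c1)),
    ((a0 == c0) && (a2 == c2)),
    ((a0 == c0) && (a3 == c3)),
    ((a1 == c1) && (a2 == c2)),
    ((a1 == c1) && (a3 == c3)),
    ((a2 == c2) && (a3 == c3)),
    ((b0 == c0) && (b1 == c1)),
    ((b0 == c0) && (b2 == c2)),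
    ((b0 == c0) && (b3 == c3)),
    ((b1 == c1) && (b2 == c2)),
    ((b1 == c1) && (b3 == c3))
    | ((b2 == c2) && (b3 == c3))].
Proof.
by case: a0; case: a1; case: a2; case: a3; case: b0; case: b1; case: b2; case: b3;
   case: c0; case: c1; case: c2; case: c3.
Qed.

Lemma comb3 (E : input 4 -> input 4 -> Prop)
  (HE : forall k l : 'I_4, k != l -> forall x x' : input 4, x k = x' k -> x l = x' l -> E x x')
  (x1 x2 x3 : input 4) : [\/ E x1 x2, E x1 x3 | E x2 x3].
Proof.
have := comb12 (x1 i0) (x1 i1) (x1 i2) (x1 i3) (x2 i0) (x2 i1) (x2 i2) (x2 i3) (x3 i0) (x3 i1) (x3 i2) (x3 i3).
move=> /orP[H|/orP[H|/orP[H|/orP[H|/orP[H|/orP[H|/orP[H|/orP[H|/orP[H|/orP[H|/orP[H|/orP[H|/orP[H|/orP[H|/orP[H|/orP[H|/orP[H|H]]]]]]]]]]]]]]]]].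
- by case/andP: H => /eqP h1 /eqP h2; apply: Or31; exact: (HE i0 i1 isT _ _ h1 h2).
- by case/andP: H => /eqP h1 /eqP h2; apply: Or31; exact: (HE i0 i2 isT _ _ h1 h2).
- by case/andP: H => /eqP h1 /eqP h2; apply: Or31; exact: (HE i0 i3 isT _ _ h1 h2).
- by case/andP: H => /eqP h1 /eqP h2; apply: Or31; exact: (HE i1 i2 isT _ _ h1 h2).
- by case/andP: H => /eqP h1 /eqP h2; apply: Or31; exact: (HE i1 i3 isT _ _ h1 h2).
- by case/andP: H => /eqP h1 /eqP h2; apply: Or31; exact: (HE i2 i3 isT _ _ h1 h2).
- by case/andP: H => /eqP h1 /eqP h2; apply: Or32; exact: (HE i0 i1 isT _ _ h1 h2).
- by case/andP: H => /eqP h1 /eqP h2; apply: Or32; exact: (HE i0 i2 isT _ _ h1 h2).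
- by case/andP: H => /eqP h1 /eqP h2; apply: Or32; exact: (HE i0 i3 isT _ _ h1 h2).
- by case/andP: H => /eqP h1 /eqP h2; apply: Or32; exact: (HE i1 i2 isT _ _ h1 h2).
- by case/andP: H => /eqP h1 /eqP h2; apply: Or32; exact: (HE i1 i3 isT _ _ h1 h2).
- by case/andP: H => /eqP h1 /eqP h2; apply: Or32; exact: (HE i2 i3 isT _ _ h1 h2).
- by case/andP: H => /eqP h1 /eqP h2; apply: Or33; exact: (HE i0 i1 isT _ _ h1 h2).
- by case/andP: H => /eqP h1 /eqP h2; apply: Or33; exact: (HE i0 i2 isT _ _ h1 h2).
- by case/andP: H => /eqP h1 /eqP h2; apply: Or33; exact: (HE i0 i3 isT _ _ h1 h2).
- by case/andP: H => /eqP h1 /eqP h2; apply: Or33; exact: (HE i1 i2 isT _ _ h1 h2).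
- by case/andP: H => /eqP h1 /eqP h2; apply: Or33; exact: (HE i1 i3 isT _ _ h1 h2).
- by case/andP: H => /eqP h1 /eqP h2; apply: Or33; exact: (HE i2 i3 isT _ _ h1 h2).
Qed.


Section MAC.
Variable R : realType.
Variables (Y : finType) (W : input 4 -> Y -> R).
Hypothesis W0 : forall x y, 0 <= W x y.
Hypothesis W1 : forall x, \sum_y W x y = 1.

Lemma c16 : (2 : R) ^+ 4 = 16.
Proof. rewrite !exprS expr0; lra. Qed.

Lemma MP0 : forall w, 0 <= MAC_prob W w.
Proof. by move=> w; rewrite /MAC_prob divr_ge0 // exprn_ge0. Qed.

Lemma sumfst (Q : pred (input 4)) :
  \sum_(w | Q w.1) MAC_prob W w = \sum_(x | Q x) (2 ^+ 4)^-1.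
Proof.
rewrite /MAC_prob (eq_bigl (fun w => Q w.1 && true)); last by move=> w; rewrite andbT.
rewrite -(pair_big_dep Q (fun _ _ => true) (fun x y => W x y / 2 ^+ 4)).
by apply: eq_bigr => x _; rewrite -mulr_suml W1 mul1r.
Qed.

Lemma MP1 : \sum_w MAC_prob W w = 1.
Proof.
rewrite (eq_bigl (fun w => predT w.1)) // sumfst.
have -> : \sum_(x : input 4 | predT x) ((2 : R) ^+ 4)^-1 = \sum_(x in [set: input 4]) (2 ^+ 4)^-1.
  apply: eq_bigl => x /=. by rewrite in_setT.
rewrite sumr_const cardsT card_ffun card_bool card_ord c16.
have -> : (2 ^ 4)%N = 16%N by [].
rewrite -(mulr_natr (16 : R)^-1) mulVf //; apply/eqP; lra.

Qed.

Lemma restrT (x : input 4) : restr setT x = x.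
Proof. by apply/ffunP => i; rewrite ffunE inE. Qed.

Lemma law_full a : law (MAC_prob W) (fun w => restr setT w.1) a <= 16^-1.
Proof.
rewrite /law (eq_bigl (fun w => w.1 == a)); last by move=> w; rewrite restrT.
have E := sumfst (fun x => x == a).
apply: le_trans (_ : _ <= \sum_(x | x == a) ((2 : R) ^+ 4)^-1) _.
  by rewrite le_eqVlt; apply/orP; left; apply/eqP; exact: E.
by rewrite big_pred1_eq c16.
Qed.

Lemma law_fibre (k l : 'I_4) (kl : k != l) (x0 : input 4) :
  4^-1 <= law (MAC_prob W) (fun w => restr (~: [set k; l]) w.1)
             (restr (~: [set k; l]) x0).
Proof.
set S := ~: [set k; l].
have E : law (MAC_prob W) (fun w => restr S w.1) (restr S x0) =
    \sum_(x | restr S x == restr S x0) ((2 : R) ^+ 4)^-1.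
  exact: (sumfst (fun x => restr S x == restr S x0)).
rewrite E.
set F := [set x : input 4 | restr S x == restr S x0].
rewrite (eq_bigl (fun x => x \in F)); last by move=> x; rewrite inE.
rewrite sumr_const.
pose upd (uv : bool * bool) : input 4 :=
  [ffun i => if i == k then uv.1 else if i == l then uv.2 else x0 i].
have inj : injective upd.
  move=> [u v] [u' v'] /= Eu.
  have Ek := congr1 (fun h : input 4 => h k) Eu.
  have El := congr1 (fun h : input 4 => h l) Eu.
  move: Ek El; rewrite /upd /= !ffunE eqxx (eq_sym l k) (negbTE kl) eqxx /=.
  by move=> -> ->.
have sub : [set upd uv | uv in [set: bool * bool]] \subset F.
  apply/subsetP => x /imsetP [uv _ ->]; rewrite inE; apply/eqP/ffunP => i.
  rewrite /upd !ffunE; case: ifP => // Hi.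
  move: Hi; rewrite !inE negb_or => /andP[/negbTE -> /negbTE ->] //.
have card4 : (4 <= #|F|)%N.
  by have := subset_leq_card sub; rewrite card_imset // cardsT card_prod card_bool.
rewrite -mulr_natr c16.
have : (4%:R : R) <= #|F|%:R by rewrite ler_nat.
lra.
Qed.

Lemma pair_det (k l : 'I_4) (kl : k != l)
  (Hr : MAC_rank W (~: [set k; l]) = 2) x x' y :
  0 < W x y -> 0 < W x' y -> x k = x' k -> x l = x' l -> x = x'.
Proof.
move=> Wx Wx' ek el.
set S := ~: [set k; l].
have l2 := @ln2_gt0 R.
have Hmi : mutual_info (MAC_prob W) (fun w => restr S w.1)
              (fun w => (w.2, restr (~: S) w.1)) = - log2 (4^-1 : R).
  rewrite -[mutual_info _ _ _]/(MAC_rank W S) Hr /log2 lnV ?posrE // ln4E mulr2n.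
  by field; rewrite (lt0r_neq0 l2).
have Hc : forall w, 0 < MAC_prob W w ->
    4^-1 <= law (MAC_prob W) (fun w => restr S w.1) (restr S w.1).
  by move=> w _; apply: law_fibre.
have c4 : 0 < (4 : R)^-1 by rewrite invr_gt0.
have H := @mi_det R _ (MAC_prob W) _ _ (fun w => restr S w.1)
   (fun w => (w.2, restr (~: S) w.1)) MP0 MP1 (4^-1) c4 Hc Hmi (x, y) (x', y).
have Px : 0 < MAC_prob W (x, y) by rewrite /MAC_prob divr_gt0 // exprn_gt0.
have Px' : 0 < MAC_prob W (x', y) by rewrite /MAC_prob divr_gt0 // exprn_gt0.
have E : restr S x = restr S x'.
  apply: (H Px Px') => /=; rewrite /S setCK; congr (_, _).
  apply/ffunP => i; rewrite !ffunE !inE.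
  by case: eqP => [->|_]; [rewrite ek | case: eqP => [->|] //; rewrite el].
apply/ffunP => i; case: (boolP (i \in S)) => Hi.
  by have := congr1 (fun h : input 4 => h i) E; rewrite /= !ffunE Hi.
by move: Hi; rewrite !inE negbK => /orP[] /eqP ->.
Qed.

End MAC.

Theorem mainTheorem2 (R : realType) :
  ~ exists (Y : finType) (W : input 4 -> Y -> R),
      is_MAC W /\
      forall S : {set 'I_4}, MAC_rank W S = (minn #|S| 2)%:R.
Proof.
move=> [Y [W [[W0 W1] Hr]]].
have Hpair : forall k l : 'I_4, k != l -> forall x x' y,
    0 < W x y -> 0 < W x' y -> x k = x' k -> x l = x' l -> x = x'.
  move=> k l kl; apply: pair_det => //; rewrite Hr.
  have := cardsC [set k; l]; rewrite cards2 kl card_ord.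
  by case: #|~: _| => [|[|[|n]]].
have Hfull := Hr setT.
rewrite cardsT card_ord in Hfull.
have Hpos : forall w, 0 < MAC_prob W w -> 0 < W w.1 w.2.
  move=> w; rewrite /MAC_prob => h.
  have n0 : (2 : R) ^+ 4 != 0 by rewrite c16; apply/eqP; lra.
  have -> : W w.1 w.2 = W w.1 w.2 / 2 ^+ 4 * 2 ^+ 4 by rewrite divfK.
  by rewrite mulr_gt0 // exprn_gt0.
have H3 : forall b a1 a2 a3,
    joint (MAC_prob W) (fun w => restr setT w.1) (fun w => (w.2, restr (~: setT) w.1)) a1 b != 0 ->
    joint (MAC_prob W) (fun w => restr setT w.1) (fun w => (w.2, restr (~: setT) w.1)) a2 b != 0 ->
    joint (MAC_prob W) (fun w => restr setT w.1) (fun w => (w.2, restr (~: setT) w.1)) a3 b != 0 ->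
    [\/ a1 = a2, a1 = a3 | a2 = a3].
  move=> b a1 a2 a3 j1 j2 j3.
  have [w1 [f1 g1 p1]] := @joint_pos R _ (MAC_prob W) _ _ _ _ (@MP0 R Y W W0) a1 b j1.
  have [w2 [f2 g2 p2]] := @joint_pos R _ (MAC_prob W) _ _ _ _ (@MP0 R Y W W0) a2 b j2.
  have [w3 [f3 g3 p3]] := @joint_pos R _ (MAC_prob W) _ _ _ _ (@MP0 R Y W W0) a3 b j3.
  move: f1 f2 f3; rewrite !restrT => <- <- <-.
  have e2 : w2.2 = w1.2 by rewrite -[w2.2]/((w2.2, restr (~: setT) w2.1).1) g2 -g1.
  have e3 : w3.2 = w1.2 by rewrite -[w3.2]/((w3.2, restr (~: setT) w3.1).1) g3 -g1.
  have q1 := Hpos _ p1; have q2 := Hpos _ p2; have q3 := Hpos _ p3.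
  rewrite e2 in q2; rewrite e3 in q3.
  pose E (x x' : input 4) := 0 < W x w1.2 -> 0 < W x' w1.2 -> x = x'.
  have HE : forall k l : 'I_4, k != l -> forall x x' : input 4, x k = x' k -> x l = x' l -> E x x'.
    by move=> k l kl x x' ek el hx hx'; apply: (Hpair k l kl x x' w1.2).
  by case: (@comb3 E HE w1.1 w2.1 w3.1) => h; [apply: Or31 | apply: Or32 | apply: Or33]; apply: h.
have := @mi_big R _ (MAC_prob W) _ _ (fun w => restr setT w.1)
   (fun w => (w.2, restr (~: setT) w.1)) (@MP0 R Y W W0) (@MP1 R Y W W1) (@law_full R Y W W1) H3.
by rewrite -[mutual_info _ _ _]/(MAC_rank W setT) Hfull ltxx.
Qed.
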